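(* Let $A$ be a wqo with $\mathbf{w}(A)=\alpha+n$ where $\alpha$ is an ordinal and $0\le n<\omega$. Then there exists a wqo $B$ with $\mathbf{w}(B)=\alpha$ such that $B\sqcup\Gamma_n$ is isomorphic to a substructure of $A$.
   Context: A wqo is a quasi-order in which every infinite sequence $x_0,x_1,\dots$ has $i<j$ with $x_i\le x_j$. $\mathbf{w}(A)$ (width) is the rank of the root of the well-founded tree of finite sequences of pairwise incomparable elements of $A$ (root: empty sequence, children: one-element extensions; rank $r(s)=\sup\{r(t)+1: t \text{ child of } s\}$). $\Gamma_n$ is an $n$-element antichain. $B\sqcup C$ is the disjoint union with ordering $\le_B\cup\le_C$. A substructure of $A$ is a subset of $A$ with the restricted ordering. *)

(* Defs.v *)
From Stdlib Require Import List Fin.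
Import ListNotations.

Definition qo {A : Type} (le : A -> A -> Prop) : Prop :=
  (forall x, le x x) /\ (forall x y z, le x y -> le y z -> le x z).

Definition wqo {A : Type} (le : A -> A -> Prop) : Prop :=
  qo le /\ forall f : nat -> A, exists i j, i < j /\ le (f i) (f j).

Definition incomp {A : Type} (le : A -> A -> Prop) (x y : A) : Prop :=
  ~ le x y /\ ~ le y x.

(* children in the tree of finite sequences of pairwise incomparable
   elements: one-element extensions keeping pairwise incomparability *)
Definition child {A : Type} (le : A -> A -> Prop) (s t : list A) : Prop :=
  exists x, t = s ++ [x] /\ Forall (incomp le x) s.

(* ordinals as (arbitrary-branching) well-founded trees; the ordinal
   denoted by Node J f is sup_i (f i + 1) *)
Inductive ord : Type :=
  | Node : forall J : Type, (J -> ord) -> ord.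

Definition osucc (a : ord) : ord := Node unit (fun _ => a).
Definition oadd_nat (a : ord) (n : nat) : ord := Nat.iter n osucc a.

(* rank(a) <= rank_T(s), for s a node of a tree given by a child relation *)
Fixpoint ord_le_tree (a : ord) {T : Type} (ch : T -> T -> Prop) (s : T) : Prop :=
  match a with
  | Node J f => forall i, exists t, ch s t /\ ord_le_tree (f i) ch t
  end.

(* rank_T(s) <= rank(a) *)
Inductive tree_le_ord {T : Type} (ch : T -> T -> Prop) : T -> ord -> Prop :=
  | tlo : forall s J (f : J -> ord),
      (forall t, ch s t -> exists i, tree_le_ord ch t (f i)) ->
      tree_le_ord ch s (Node J f).

(* w(A) = alpha : rank of the root [] of the antichain-sequence tree *)
Definition width_is {A : Type} (le : A -> A -> Prop) (alpha : ord) : Prop :=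
  tree_le_ord (child le) [] alpha /\ ord_le_tree alpha (child le) [].

(* ordering of B ⊔ Γ_n, Γ_n the n-element antichain Fin.t n *)
Definition sum_le {B : Type} (leB : B -> B -> Prop) (n : nat)
  (x y : B + Fin.t n) : Prop :=
  match x, y with
  | inl a, inl b => leB a b
  | inr i, inr j => i = j
  | _, _ => False
  end.

(* Main.v *)
Require Import Defs.
From Stdlib Require Import List Fin Eqdep Classical_Prop.
Import ListNotations.

Lemma bisim_ole {T1 T2} (c1 : T1->T1->Prop) (c2 : T2->T2->Prop) (R : T1->T2->Prop)
 (H12: forall s1 s2, R s1 s2 -> forall t1, c1 s1 t1 -> exists t2, c2 s2 t2 /\ R t1 t2) :
 forall a s1 s2, R s1 s2 -> ord_le_tree a c1 s1 -> ord_le_tree a c2 s2.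
Proof.
  induction a as [J f IH]; intros s1 s2 HR H; simpl in *.
  intros i. destruct (H i) as [t [Ht Hl]].
  destruct (H12 _ _ HR _ Ht) as [t2 [Ht2 HR2]].
  exists t2; split; auto. eapply IH; eauto.
Qed.

Lemma bisim_tlo {T1 T2} (c1 : T1->T1->Prop) (c2 : T2->T2->Prop) (R : T1->T2->Prop)
 (H21: forall s1 s2, R s1 s2 -> forall t2, c2 s2 t2 -> exists t1, c1 s1 t1 /\ R t1 t2) :
 forall s1 a, tree_le_ord c1 s1 a -> forall s2, R s1 s2 -> tree_le_ord c2 s2 a.
Proof.
  fix IH 3. intros s1 a H s2 HR. destruct H as [s J f Hc].
  constructor. intros t2 Ht2.
  destruct (H21 _ _ HR _ Ht2) as [t1 [Ht1 HR1]].
  destruct (Hc _ Ht1) as [i Hi]. exists i. exact (IH _ _ Hi _ HR1).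
Qed.

Lemma incomp_sym {A} (le : A -> A -> Prop) x y : incomp le x y -> incomp le y x.
Proof. unfold incomp; tauto. Qed.

Section Sub.
Variables (A : Type) (leA : A -> A -> Prop) (x : A).
Definition SB := {y : A | incomp leA x y}.
Definition leSB (a b : SB) := leA (proj1_sig a) (proj1_sig b).
Definition RS (s : list A) (s' : list SB) := s = x :: map (@proj1_sig _ _) s'.

Lemma forall_map (z : SB) s' :
  Forall (incomp leSB z) s' <-> Forall (incomp leA (proj1_sig z)) (map (@proj1_sig _ _) s').
Proof.
  induction s' as [|a s' IH]; simpl; split; intro H; constructor;
    inversion H; subst; try tauto; apply IH; auto.
Qed.

Lemma RS12 : forall s1 s2, RS s1 s2 -> forall t1, child leA s1 t1 ->
   exists t2, child leSB s2 t2 /\ RS t1 t2.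
Proof.
  intros s1 s2 HR t1 [z [Ht Hf]]. subst. unfold RS in *; subst.
  inversion Hf; subst.
  exists (s2 ++ [exist _ z (incomp_sym _ _ _ H1)]). split.
  - exists (exist _ z (incomp_sym _ _ _ H1)). split; auto.
    apply forall_map. simpl. auto.
  - rewrite map_app. reflexivity.
Qed.

Lemma RS21 : forall s1 s2, RS s1 s2 -> forall t2, child leSB s2 t2 ->
   exists t1, child leA s1 t1 /\ RS t1 t2.
Proof.
  intros s1 s2 HR t2 [z [Ht Hf]]. subst. unfold RS in *; subst.
  exists ((x :: map (@proj1_sig _ _) s2) ++ [proj1_sig z]). split.
  - exists (proj1_sig z). split; auto. constructor.
    + apply incomp_sym. exact (proj2_sig z).
    + apply forall_map; auto.
  - unfold RS. rewrite map_app. reflexivity.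
Qed.

Lemma wqo_SB : wqo leA -> wqo leSB.
Proof.
  intros [[Hr Ht] Hw]. split. split.
  - intros a; apply Hr.
  - intros a b c; apply Ht.
  - intros f. destruct (Hw (fun i => proj1_sig (f i))) as [i [j H]].
    exists i, j; exact H.
Qed.
End Sub.

Theorem mainTheorem6 (A : Type) (leA : A -> A -> Prop) (alpha : ord) (n : nat) :
  wqo leA -> width_is leA (oadd_nat alpha n) ->
  exists (B : Type) (leB : B -> B -> Prop),
    wqo leB /\ width_is leB alpha /\
    exists e : B + Fin.t n -> A,
      (forall x y, e x = e y -> x = y) /\
      (forall x y, sum_le leB n x y <-> leA (e x) (e y)).
Proof.
  revert A leA. induction n as [|n IHn]; intros A leA Hw Hwi.
  - exists A, leA. split; [exact Hw|]. split; [exact Hwi|].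
    exists (fun y => match y with inl a => a | inr i => Fin.case0 (fun _ => A) i end).
    split.
    + intros [a|i] [b|j]; simpl; intros; try (apply Fin.case0; assumption).
      congruence.
    + intros [a|i] [b|j]; simpl; try (apply Fin.case0; assumption). tauto.
  - change (oadd_nat alpha (S n)) with (osucc (oadd_nat alpha n)) in Hwi.
    set (g := oadd_nat alpha n) in *.
    destruct Hwi as [Htl Hol].
    simpl in Hol. destruct (Hol tt) as [t [[x [Ht _]] Hx]]. simpl in Ht. subst t.
    assert (Hxt : tree_le_ord (child leA) [x] g).
    { assert (K : forall o, tree_le_ord (child leA) [] o -> o = osucc g ->
         tree_le_ord (child leA) [x] g).
      { intros o Ho. remember [] as s0 eqn:Es. destruct Ho as [s J f Hc]. intro E. unfold osucc in E.
        injection E. intros E2 E1. subst J.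
        apply inj_pair2 in E2. subst f s.
        destruct (Hc [x]) as [[] Hi]; [exists x; split; auto|exact Hi]. }
      exact (K _ Htl eq_refl). }
    assert (HwB : width_is (leSB A leA x) g).
    { split.
      - eapply bisim_tlo. apply RS21. exact Hxt. reflexivity.
      - eapply bisim_ole. apply RS12. reflexivity. exact Hx. }
    destruct Hw as [[Hr Htr] Hwq].
    destruct (IHn _ _ (wqo_SB A leA x (conj (conj Hr Htr) Hwq)) HwB)
      as [B [leB [HB [HBw [e [Hinj Hord]]]]]].
    exists B, leB. split; [exact HB|]. split; [exact HBw|].
    exists (fun y => match y with
             | inl b => proj1_sig (e (inl b))
             | inr i => Fin.caseS' i (fun _ => A) x (fun j => proj1_sig (e (inr j))) end).
    assert (Hne : forall w, ~ leA x (proj1_sig (e w)) /\ ~ leA (proj1_sig (e w)) x).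
    { intros w. exact (proj2_sig (e w)). }
    assert (Hne' : forall w, proj1_sig (e w) <> x).
    { intros w H. apply (proj1 (Hne w)). rewrite H. apply Hr. }
    assert (Hinj' : forall u v, proj1_sig (e u) = proj1_sig (e v) -> u = v).
    { intros u v H. apply Hinj. destruct (e u), (e v); simpl in H; subst.
      f_equal. apply Classical_Prop.proof_irrelevance. }
    split.
    + intros [a|i] [b|j]; simpl.
      * intro H. apply Hinj' in H. congruence.
      * pattern j; apply Fin.caseS'; simpl.
        -- intro H. elim (Hne' (inl a)); auto.
        -- intros p H. apply Hinj' in H. discriminate.
      * pattern i; apply Fin.caseS'; simpl.
        -- intro H. elim (Hne' (inl b)); auto.
        -- intros p H. apply Hinj' in H. discriminate.
      * pattern i; apply Fin.caseS'; pattern j; apply Fin.caseS'; simpl.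
        -- auto.
        -- intros p H. elim (Hne' (inr p)); auto.
        -- intros p H. elim (Hne' (inr p)); auto.
        -- intros q p H. apply Hinj' in H. inversion H. subst. reflexivity.
    + intros [a|i] [b|j]; simpl.
      * apply (Hord (inl a) (inl b)).
      * pattern j; apply Fin.caseS'; simpl.
        -- split; [tauto|]. intro H. exfalso. apply (proj2 (Hne (inl a))); exact H.
        -- intros p. rewrite <- (Hord (inl a) (inr p)). simpl. tauto.
      * pattern i; apply Fin.caseS'; simpl.
        -- split; [tauto|]. intro H. exfalso. apply (proj1 (Hne (inl b))); exact H.
        -- intros p. rewrite <- (Hord (inr p) (inl b)). simpl. tauto.
      * pattern i; apply Fin.caseS'; pattern j; apply Fin.caseS'; simpl.
        -- split; auto.
        -- intros p. split; [intro H; discriminate|]. intro H; exfalso; first [apply (proj1 (Hne (inr p))); exact H | apply (proj2 (Hne (inr p))); exact H].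
        -- intros p. split; [intro H; discriminate|]. intro H; exfalso; first [apply (proj1 (Hne (inr p))); exact H | apply (proj2 (Hne (inr p))); exact H].
        -- intros q p. rewrite <- (Hord (inr p) (inr q)). simpl. split.
           ++ intro H. apply Fin.FS_inj; exact H.
           ++ intro H; subst; reflexivity.
Qed.
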